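(* Consider strings $P$ and $S$ such that $|S|\le |Q_k|+4\tau$ and $P$ contains $Q_k$ as a substring. Then $P$ occurs in $S$ at position $p$ if and only if $r_k(P)$ occurs in $r_k(S)$ at position $p$.
   Context: For a string $S$, $S[1..p]$ is a period of $S$ if $S[i]=S[i+p]$ for $1\le i\le |S|-p$, and $\mathrm{per}(S)$ denotes the length of the shortest period of $S$. Let $\tau\ge1$ and $\ell>10\tau$ be integers, $S_k$ a string of length at least $\ell$, and $Q_k = S_k[1+2\tau..\ell]$, so $|Q_k|=\ell-2\tau\ge 8\tau$. Let $\rho=Q_k[1..\mathrm{per}(Q_k)]$. If $\mathrm{per}(Q_k) > 4\tau$, define $Q_k' = \#$, where $\#$ is a special letter not in the main alphabet. Otherwise write $Q_k=\rho^t\rho'$ with $\rho'$ a prefix of $\rho$, and set $Q_k'=\rho^{t'}\rho'$ for some $t'\le t$ chosen so that $8\tau\le |Q_k'|<12\tau$. For any string $S$, define $r_k(S)=\varepsilon$ (the empty string) if $S$ does not contain $Q_k$, and otherwise $r_k(S)$ is the string obtained from $S$ by replacing the first occurrence of $Q_k$ with $Q'_k$. *)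

(* Defs.v *)
From mathcomp Require Import all_boot.
Set Implicit Arguments. Unset Strict Implicit. Unset Printing Implicit Defensive.

(* p is a period of s: 1 <= p and s[i] = s[i+p] for all valid i
   (equivalently the prefix of length |s|-p equals the suffix starting at p). *)
Definition is_period (A : eqType) (s : seq A) (p : nat) : bool :=
  (0 < p) && (take (size s - p) s == drop p s).

(* per s = length of the shortest period (|s| itself is always a period). *)
Definition per (A : eqType) (s : seq A) : nat :=
  (find (is_period s) (iota 1 (size s))).+1.

(* Q_k = S_k[1+2tau .. ell] *)
Definition Qk (A : eqType) (tau ell : nat) (Sk : seq A) : seq A :=
  drop (2 * tau) (take ell Sk).

Definition spow (A : eqType) (rho : seq A) (t : nat) : seq A :=
  flatten (nseq t rho).

(* Extended alphabet: Some a for letters of A, None for the special letter #. *)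
Definition hash {A : Type} : option A := None.

Definition valid_Qprime (A : eqType) (tau : nat) (Q : seq A)
    (Q' : seq (option A)) : Prop :=
  let rho := take (per Q) Q in
  if 4 * tau < per Q then Q' = [:: hash]
  else exists (t t' : nat) (rho' : seq A),
      [/\ Q = spow rho t ++ rho', prefix rho' rho, t' <= t,
          Q' = map Some (spow rho t' ++ rho') &
          8 * tau <= size Q' < 12 * tau].

Definition rk (A : eqType) (Q : seq A) (Q' : seq (option A)) (S : seq A)
    : seq (option A) :=
  if infix Q S then
    let i := infix_index Q S in
    map Some (take i S) ++ Q' ++ map Some (drop (i + size Q) S)
  else [::].

(* P occurs in S at (0-based) position p. *)
Definition occurs_at (T : eqType) (P S : seq T) (p : nat) : bool :=
  take (size P) (drop p S) == P.

(* Main.v *)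
Require Import Defs.
From mathcomp Require Import all_boot zify.
Set Implicit Arguments. Unset Strict Implicit. Unset Printing Implicit Defensive.

Module Part1.

Lemma occP (T : eqType) (x0 : T) (P S : seq T) p : 0 < size P ->
  occurs_at P S p <->
  (p + size P <= size S /\ forall k, k < size P -> nth x0 S (p + k) = nth x0 P k).
Proof.
move=> HP; rewrite /occurs_at; split.
  move/eqP=> H.
  have Hs : size (take (size P) (drop p S)) = size P by rewrite H.
  split.
    move: Hs; rewrite size_take size_drop; case: ifP => Hc Hs; lia.
  move=> k Hk; have -> : nth x0 P k = nth x0 (take (size P) (drop p S)) k by rewrite H.
  by rewrite nth_take // nth_drop.
move=> [Hs Hn]; apply/eqP; apply: (eq_from_nth (x0:=x0)).
  rewrite size_takel // size_drop; lia.
move=> k; rewrite size_takel ?size_drop; last lia.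
by move=> Hk; rewrite nth_take // nth_drop Hn.
Qed.

Lemma infix_index_min (T : eqType) (s1 s2 : seq T) j :
  j < infix_index s1 s2 -> ~~ occurs_at s1 s2 j.
Proof.
elim: s2 j => [|y s2 IH] j /=.
  case: ifP => // Hp; rewrite ltnS leqn0 => /eqP ->.
  rewrite /occurs_at /=; apply/negP => /eqP H.
  by move: Hp; rewrite -H.
case: ifP => // Hp; case: j => [|j].
  move=> _; rewrite /occurs_at drop0; apply/negP => H.
  change (prefix s1 (y :: s2) = false) in Hp.
  by move: Hp; rewrite prefixE H.
rewrite ltnS => Hj; rewrite /occurs_at /=; exact: IH.
Qed.

Lemma infix_index_occ (T : eqType) (s1 s2 : seq T) :
  infix s1 s2 -> occurs_at s1 s2 (infix_index s1 s2).
Proof. by rewrite infixE. Qed.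

Lemma occ_infix (T : eqType) (s1 s2 : seq T) j : 0 < size s1 ->
  occurs_at s1 s2 j -> infix s1 s2 /\ infix_index s1 s2 <= j.
Proof.
move=> H0 Ho.
have Hle : infix_index s1 s2 <= j.
  rewrite leqNgt; apply/negP => /infix_index_min; by rewrite Ho.
case: s1 H0 Ho Hle => [//|x s1'] _ Ho Hle.
move: Ho => /(@occP _ x (x :: s1') s2 j (ltn0Sn (size s1'))) [Hs _].
split => //; rewrite -infixTindex; move: Hs => /=; lia.
Qed.

Definition D (T : Type) (s : seq T) (i d : nat) := take i s ++ drop (i + d) s.

Lemma nth_D (T : Type) (x0 : T) s i d k : i <= size s ->
  nth x0 (D s i d) k = if k < i then nth x0 s k else nth x0 s (k + d).
Proof.
move=> Hi; rewrite /D nth_cat size_takel //.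
case: ifP => Hk; first by rewrite nth_take.
rewrite nth_drop; congr nth; move: Hk; lia.
Qed.

Lemma size_D (T : Type) (s : seq T) i d : i + d <= size s ->
  size (D s i d) = size s - d.
Proof. move=> H; rewrite /D size_cat size_takel ?size_drop; lia. Qed.

Lemma f_mul (T : Type) (f : nat -> T) q : (forall k, f (k + q) = f k) ->
  forall c k, f (k + c * q) = f k.
Proof.
move=> Hf; elim=> [|c IH] k; first by rewrite mul0n addn0.
by rewrite mulSn addnA IH Hf.
Qed.

Lemma f_shift (T : Type) (f : nat -> T) q e L : 0 < q ->
  (forall k, f (k + q) = f k) -> q + e <= L ->
  (forall j, e <= j -> j < L -> f j = f (j - e)) ->
  forall y, e <= y -> f y = f (y - e).
Proof.
move=> q0 Hf HL H y Hy.
have Hd := divn_eq (y - e) q.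
have Hr := ltn_pmod (y - e) q0.
move: Hd Hr; set r := (y - e) %% q; set c := (y - e) %/ q; set cq := c * q => Hd Hr.
have E1 : y = (e + r) + c * q by rewrite -/cq; lia.
have E2 : y - e = r + c * q by rewrite -/cq; lia.
rewrite E2 (f_mul Hf) {1}E1 (f_mul Hf) H; last (by lia); last by lia.
by rewrite addKn.
Qed.

Section Per.
Variables (T : eqType) (x0 : T) (f : nat -> T) (q c : nat).
Hypothesis q0 : 0 < q.
Hypothesis Hf : forall k, f (k + q) = f k.
Let dl := c * q.

Lemma fdl k : f (k + dl) = f k.
Proof. exact: f_mul. Qed.

Lemma DelEq (s : seq T) b e L :
  (forall j, j < e + L -> nth x0 s (b + j) = f j) -> dl <= L ->
  b + e + L <= size s -> D s b dl = D s (b + e) dl.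
Proof.
move=> Hr HdL Hs; apply: (eq_from_nth (x0:=x0)).
  rewrite !size_D //; lia.
move=> k; rewrite size_D; last lia.
move=> Hk; rewrite !nth_D; try lia.
case: ifP => H1; case: ifP => H2 //; try lia.
have -> : k + dl = b + (k - b + dl) by lia.
rewrite Hr; last lia.
have -> : k = b + (k - b) by lia.
rewrite Hr; last lia.
by rewrite addKn fdl.
Qed.

Lemma Fwd (P S : seq T) p a : 0 < size P - dl -> a + dl <= size P ->
  occurs_at P S p -> occurs_at (D P a dl) (D S (p + a) dl) p.
Proof.
move=> H0 Ha.
have HP : 0 < size P by lia.
move/(occP x0 _ _ HP) => [Hs Hn].
have HD : 0 < size (D P a dl) by rewrite size_D.
apply/(occP x0 _ _ HD).
rewrite !size_D; try lia.
split; first lia.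
move=> k Hk; rewrite !nth_D; try lia.
case: ifP => H1; case: ifP => H2; try lia.
  by rewrite Hn //; lia.
rewrite -Hn; last lia.
by rewrite addnA.
Qed.

Lemma Bwd_aligned (P S : seq T) p a L : 0 < size P - dl -> dl <= L ->
  (a + L <= size P /\ forall j, j < L -> nth x0 P (a + j) = f j) ->
  (p + a + L <= size S /\ forall j, j < L -> nth x0 S (p + a + j) = f j) ->
  occurs_at (D P a dl) (D S (p + a) dl) p -> occurs_at P S p.
Proof.
move=> H0 HdL [HPs HP] [HSs HS].
have HD : 0 < size (D P a dl) by rewrite size_D; lia.
move/(occP x0 _ _ HD) => [Hs Hn].
rewrite !size_D in Hs Hn; try lia.
have HP0 : 0 < size P by lia.
apply/(occP x0 _ _ HP0); split; first lia.
move=> k Hk.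
case: (ltnP k a) => Hka.
  have := Hn k; rewrite !nth_D; try lia.
  rewrite ifT; last lia. rewrite ifT; last lia.
  move/(_ ltac:(lia)) ->; done.
case: (ltnP k (a + dl)) => Hkb.
  have := HP (k - a); have := HS (k - a).
  have -> : p + a + (k - a) = p + k by lia.
  have -> : a + (k - a) = k by lia.
  move/(_ ltac:(lia)) -> ; move/(_ ltac:(lia)) -> ; done.
have := Hn (k - dl); rewrite !nth_D; try lia.
rewrite ifF; last lia. rewrite ifF; last lia.
have -> : p + (k - dl) + dl = p + k by lia.
have -> : k - dl + dl = k by lia.
move/(_ ltac:(lia)) ->; done.
Qed.

Lemma periodic_main (tau : nat) (Q P S : seq T) p : 1 <= tau ->
  q <= 4 * tau -> (forall k, k < size Q -> nth x0 Q k = f k) ->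
  dl <= size Q -> 8 * tau <= size Q - dl -> size S <= size Q + 4 * tau ->
  infix Q P ->
  occurs_at P S p <->
  (infix Q S /\ occurs_at (D P (infix_index Q P) dl) (D S (infix_index Q S) dl) p).
Proof.
move=> t1 Hq4 HQ HdQ Hm HSs HQP.
have n0 : 0 < size Q by lia.
move Ea: (infix_index Q P) => a.
have := infix_index_occ HQP; rewrite Ea => /(occP x0 _ _ n0) [HaPs HaPn].
have HPa : forall j, j < size Q -> nth x0 P (a + j) = f j.
  by move=> j Hj; rewrite HaPn // HQ.
have HP0 : 0 < size P by lia.
split.
  move=> HPS; have HPS' := HPS; move/(occP x0 _ _ HP0): HPS' => [Hs Hn].
  have HQS : occurs_at Q S (p + a).
    apply/(occP x0 _ _ n0); split; first lia.
    by move=> k Hk; rewrite -addnA Hn ?HaPn //; lia.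
  have [HinfS Hb] := occ_infix n0 HQS.
  split => //.
  move/(occP x0 _ _ n0): HQS => [_ HQSn].
  move Eb: (infix_index Q S) => b; rewrite Eb in Hb.
  have := infix_index_occ HinfS; rewrite Eb => /(occP x0 _ _ n0) [Hbs Hbn].
  move Ee: (p + a - b) => e.
  have Hsh : forall y, e <= y -> f y = f (y - e).
    apply: (@f_shift _ f q e (size Q)) => //; first lia.
    move=> j Hj1 Hj2; rewrite -(HQ j) // -Hbn //.
    have -> : b + j = p + a + (j - e) by lia.
    by rewrite HQSn ?HQ //; lia.
  have Hreg : forall j, j < e + size Q -> nth x0 S (b + j) = f j.
    move=> j Hj; case: (ltnP j (size Q)) => Hjn; first by rewrite Hbn // HQ.
    have -> : b + j = p + a + (j - e) by lia.
    rewrite HQSn; last lia.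
    rewrite HQ; last lia.
    by rewrite (Hsh j) //; lia.
  rewrite (@DelEq S b e (size Q) Hreg) //; last lia.
  have -> : b + e = p + a by lia.
  apply: Fwd => //; lia.
move=> [HinfS Ho].
move: Ho; move Eb: (infix_index Q S) => b Ho.
have := infix_index_occ HinfS; rewrite Eb => /(occP x0 _ _ n0) [Hbs Hbn].
have HD : 0 < size (D P a dl) by rewrite size_D; lia.
have Ho' := Ho.
move/(occP x0 _ _ HD): Ho' => [HoS Hon].
rewrite !size_D in HoS Hon; try lia.
have HT1 : forall j, j < size Q - dl -> nth x0 (D S b dl) (p + a + j) = f j.
  move=> j Hj; rewrite -addnA Hon; last lia.
  rewrite nth_D; last lia. rewrite ifF; last lia.
  by rewrite -addnA HPa ?fdl //; lia.
have HT2 : forall j, j < size Q - dl -> nth x0 (D S b dl) (b + j) = f j.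
  move=> j Hj; rewrite nth_D; last lia. rewrite ifF; last lia.
  by rewrite -addnA Hbn ?HQ ?fdl //; lia.
case: (ltngtP (p + a) b) => Hab.
- exfalso.
  move Ee: (b - (p + a)) => e.
  have Hsh : forall y, e <= y -> f y = f (y - e).
    apply: (@f_shift _ f q e (size Q - dl)) => //; first lia.
    move=> j Hj1 Hj2; rewrite -HT1 //.
    have -> : p + a + j = b + (j - e) by lia.
    by rewrite HT2 //; lia.
  have HQS : occurs_at Q S (p + a).
    apply/(occP x0 _ _ n0); split; first lia.
    move=> k Hk; rewrite HQ //.
    case: (ltnP (p + a + k) b) => Hk2.
      rewrite -HT1; last lia.
      by rewrite nth_D ?ifT //; lia.
    have -> : p + a + k = b + (k - e) by lia.
    rewrite Hbn; last lia. rewrite HQ; last lia.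
    by rewrite (Hsh k) //; lia.
  have := @infix_index_min _ Q S (p + a); rewrite Eb HQS.
  by move/(_ Hab).
- move Ee: (p + a - b) => e.
  have Hsh : forall y, e <= y -> f y = f (y - e).
    apply: (@f_shift _ f q e (size Q - dl)) => //; first lia.
    move=> j Hj1 Hj2; rewrite -HT2 //.
    have -> : b + j = p + a + (j - e) by lia.
    by rewrite HT1 //; lia.
  have Hreg : forall j, j < e + size Q -> nth x0 S (b + j) = f j.
    move=> j Hj; case: (ltnP j (size Q)) => Hjn; first by rewrite Hbn // HQ.
    have := HT1 (j - dl - e); rewrite nth_D; last lia. rewrite ifF; last lia.
    have -> : p + a + (j - dl - e) + dl = b + j by lia.
    move=> ->; last lia.
    rewrite -(fdl (j - dl - e)) (_ : j - dl - e + dl = j - e); last lia.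
    by rewrite (Hsh j) //; lia.
  move: Ho; rewrite (@DelEq S b e (size Q) Hreg) //; last lia.
  have -> : b + e = p + a by lia.
  apply: (@Bwd_aligned P S p a (size Q)) => //; try lia.
  split; first lia.
  move=> j Hj; have -> : p + a + j = b + (e + j) by lia.
  rewrite Hreg; last lia.
  by rewrite (Hsh (e + j)) ?leq_addr // addKn.
- move: Ho; rewrite -Hab.
  apply: (@Bwd_aligned P S p a (size Q)) => //; try lia.
  split; first lia.
  by move=> j Hj; rewrite Hab Hbn // HQ.
Qed.
End Per.
End Part1.
Import Part1.
Module Part2.

Definition E (T : Type) (s : seq T) (i n : nat) : seq (option T) :=
  map Some (take i s) ++ [:: None] ++ map Some (drop (i + n) s).

Lemma size_E (T : Type) (s : seq T) i n : i + n <= size s ->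
  size (E s i n) = size s - n + 1.
Proof. move=> H; rewrite /E size_cat /= size_map size_takel ?size_map ?size_drop; lia. Qed.

Lemma nth_E (T : Type) (x0 : T) (s : seq T) i n k : i + n <= size s ->
  nth None (E s i n) k =
  if k < i then Some (nth x0 s k) else if k == i then None
  else if k < size s - n + 1 then Some (nth x0 s (k + n - 1)) else None.
Proof.
move=> H; rewrite /E nth_cat size_map size_takel; last lia.
case: ifP => H1.
  by rewrite (nth_map x0) ?size_takel ?nth_take //; lia.
case: eqVneq => H2.
  by rewrite H2 subnn.
have -> : k - i = (k - i - 1).+1 by lia.
rewrite /= -/(nth None _ _).
case: ifP => H3.
  rewrite (nth_map x0) ?size_drop; last lia.
  rewrite nth_drop; congr (Some (nth _ _ _)); lia.
by rewrite nth_default // size_map size_drop; lia.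
Qed.

Lemma aperiodic_main (T : eqType) (x0 : T) (tau : nat) (Q P S : seq T) p :
  0 < size Q ->
  (forall d, 0 < d -> d <= 4 * tau ->
     ~ (forall k, k + d < size Q -> nth x0 Q k = nth x0 Q (k + d))) ->
  size S <= size Q + 4 * tau -> infix Q P ->
  occurs_at P S p <-> occurs_at (rk Q [:: hash] P) (rk Q [:: hash] S) p.
Proof.
move=> n0 Hnp HSs HQP.
rewrite /rk HQP /=.
move Ea: (infix_index Q P) => a.
have := infix_index_occ HQP; rewrite Ea => /(occP x0 _ _ n0) [HaPs HaPn].
have HP0 : 0 < size P by lia.
have HE : 0 < size (E P a (size Q)) by rewrite size_E; lia.
rewrite -/(E P a (size Q)).
split.
  move=> HPS; have HPS' := HPS; move/(occP x0 _ _ HP0): HPS' => [Hs Hn].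
  have HQS : occurs_at Q S (p + a).
    apply/(occP x0 _ _ n0); split; first lia.
    by move=> k Hk; rewrite -addnA Hn ?HaPn //; lia.
  have [HinfS Hb] := occ_infix n0 HQS.
  rewrite HinfS.
  move/(occP x0 _ _ n0): HQS => [_ HQSn].
  move Eb: (infix_index Q S) => b; rewrite Eb in Hb.
  have := infix_index_occ HinfS; rewrite Eb => /(occP x0 _ _ n0) [Hbs Hbn].
  have Hba : b = p + a.
    case: (ltnP b (p + a)) => Hlt; last lia.
    exfalso.
    apply: (Hnp (p + a - b)); try lia.
    move=> k Hk; rewrite -HQSn; last lia.
    rewrite -Hbn; last lia.
    congr nth; lia.
  rewrite -/(E S b (size Q)).
  apply/(occP None _ _ HE); rewrite !size_E; try lia.
  split; first lia.
  move=> k Hk; rewrite (nth_E x0); last lia. rewrite (nth_E x0); last lia.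
  case: (ltnP k a) => H1.
    rewrite ifT; last lia. by rewrite Hn //; lia.
  case: (eqVneq k a) => H2.
    by rewrite ifF ?ifT //; lia.
  rewrite ifF; last lia. rewrite ifF; last lia.
  rewrite ifT; last lia. rewrite ifT; last lia.
  have -> : p + k + size Q - 1 = p + (k + size Q - 1) by lia.
  by rewrite Hn //; lia.
case: ifP => HinfS; last first.
  move/(occP None _ _ HE) => [Hs _]; move: Hs => /=; lia.
move Eb: (infix_index Q S) => b.
have := infix_index_occ HinfS; rewrite Eb => /(occP x0 _ _ n0) [Hbs Hbn].
rewrite -/(E S b (size Q)).
move/(occP None _ _ HE) => [HoS Hon].
rewrite !size_E in HoS Hon; try lia.
have Hba : b = p + a.
  have := Hon a; rewrite (nth_E x0); last lia. rewrite (nth_E x0); last lia.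
  rewrite ltnn eqxx.
  case: (ltnP (p + a) b) => H1; first by move=> /(_ ltac:(lia)).
  case: (eqVneq (p + a) b) => H2; first by rewrite H2.
  by rewrite ifT; [move=> /(_ ltac:(lia)) | lia].
apply/(occP x0 _ _ HP0); split; first lia.
move=> k Hk.
case: (ltnP k a) => H1.
  have := Hon k; rewrite (nth_E x0); last lia. rewrite (nth_E x0); last lia.
  rewrite ifT; last lia. rewrite ifT; last lia.
  by move=> /(_ ltac:(lia)) [].
case: (ltnP k (a + size Q)) => H2.
  have -> : p + k = b + (k - a) by lia.
  rewrite Hbn; last lia.
  have -> : k = a + (k - a) by lia.
  by rewrite HaPn ?addKn //; lia.
have := Hon (k - size Q + 1); rewrite (nth_E x0); last lia. rewrite (nth_E x0); last lia.
do ! case: ifP => ?; try lia.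
have -> : k - size Q + 1 + size Q - 1 = k by lia.
have -> : p + (k - size Q + 1) + size Q - 1 = p + k by lia.
by move=> /(_ ltac:(lia)) [].
Qed.
End Part2.
Import Part2.
Module Part3.

Lemma size_spow (T : eqType) (rho : seq T) t : size (spow rho t) = t * size rho.
Proof. elim: t => [|t IH] //; by rewrite /spow /= size_cat -/(spow rho t) IH mulSn. Qed.

Lemma spowD (T : eqType) (rho : seq T) t1 t2 :
  spow rho (t1 + t2) = spow rho t1 ++ spow rho t2.
Proof. by rewrite /spow nseqD flatten_cat. Qed.

Lemma nth_spow (T : eqType) (x0 : T) (rho : seq T) t k : k < t * size rho ->
  nth x0 (spow rho t) k = nth x0 rho (k %% size rho).
Proof.
elim: t k => [|t IH] k; first by rewrite mul0n.
rewrite mulSn => Hk.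
rewrite /spow /= -/(spow rho t) nth_cat.
case: ifP => H1; first by rewrite modn_small.
rewrite IH; last lia.
have {2}-> : k = k - size rho + size rho by lia.
by rewrite modnDr.
Qed.

Lemma per_le (T : eqType) (x0 : T) (Q : seq T) d : 0 < d -> d <= size Q ->
  (forall k, k + d < size Q -> nth x0 Q k = nth x0 Q (k + d)) -> per Q <= d.
Proof.
move=> d0 dQ H.
have Hp : is_period Q d.
  rewrite /is_period d0 /=; apply/eqP; apply: (eq_from_nth (x0:=x0)).
    rewrite size_takel ?size_drop //; lia.
  move=> k; rewrite size_takel; last lia.
  move=> Hk; rewrite nth_take // nth_drop H; last lia.
  by rewrite addnC.
rewrite /per; case: (ltnP (d - 1) (find (is_period Q) (iota 1 (size Q)))) => H1.
  have := before_find 0 H1; rewrite nth_iota; last lia.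
  by rewrite (_ : 1 + (d - 1) = d) ?Hp //; lia.
lia.
Qed.

Lemma occ_map (T : eqType) (x y : seq T) p :
  occurs_at (map Some x) (map Some y) p = occurs_at x y p.
Proof.
rewrite /occurs_at size_map -map_drop -map_take.
apply/eqP/eqP => [H|->] //.
apply: (inj_map (@Some_inj _)) H.
Qed.

Lemma rk_per (T : eqType) (Q s : seq T) dl : dl <= size Q -> infix Q s ->
  rk Q (map Some (drop dl Q)) s = map Some (D s (infix_index Q s) dl).
Proof.
move=> HdQ Hin; rewrite /rk Hin /= /D !map_cat; congr (_ ++ _).
rewrite -map_cat; congr map.
have := infix_index_occ Hin; rewrite /occurs_at => /eqP HQ.
move: HQ; move Ei: (infix_index Q s) => i HQ.
have Hs : drop i s = Q ++ drop (i + size Q) s.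
  by rewrite -{1}(cat_take_drop (size Q) (drop i s)) HQ drop_drop addnC.
rewrite (addnC i dl) -(drop_drop s dl i) Hs drop_cat; case: ifP => H //.
have -> : dl = size Q by lia.
by rewrite subnn drop0 drop_size.
Qed.
End Part3.
Import Part3.


Theorem lemma6 (A : eqType) (tau ell : nat) (Sk : seq A)
    (Q' : seq (option A)) (P S : seq A) (p : nat) :
  1 <= tau -> 10 * tau < ell -> ell <= size Sk ->
  valid_Qprime tau (Qk tau ell Sk) Q' ->
  size S <= size (Qk tau ell Sk) + 4 * tau ->
  infix (Qk tau ell Sk) P ->
  occurs_at P S p <->
  occurs_at (rk (Qk tau ell Sk) Q' P) (rk (Qk tau ell Sk) Q' S) p.
Proof.
move=> t1 Hell Hsk HV HSs HQP.
have HsQ : size (Qk tau ell Sk) = ell - 2 * tau by rewrite /Qk size_drop size_takel.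
move: (Qk tau ell Sk) HsQ HV HSs HQP => Q HsQ HV HSs HQP.
have n0 : 0 < size Q by lia.
have [x0 _] : exists x : A, true by case: Q n0 {HsQ HV HSs HQP} => [|x ?] //; exists x.
move: HV; rewrite /valid_Qprime; case: ifP => Hper.
  move=> ->; apply: (@aperiodic_main _ x0 tau) => //.
  move=> d d0 d4 Hd.
  have := @per_le _ x0 Q d d0 ltac:(lia) Hd; lia.
move=> [t [t' [rho' [HQd Hpre Htt HQ' Hsz]]]].
have q0 : 0 < per Q by [].
move: q0 Hper HQd Hpre HQ'; move Eq: (per Q) => q q0 Hper.
move Erho: (take q Q) => rho HQd Hpre HQ'.
have Hq4 : q <= 4 * tau by lia.
have Hrho : size rho = q by rewrite -Erho size_takel //; lia.
have Hrho' : size rho' <= q.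
  by case/prefixP: Hpre => r Hr; rewrite -Hrho Hr size_cat; lia.
have HsQ' : size Q = t * q + size rho' by rewrite {1}HQd size_cat size_spow Hrho.
have Hdrop : drop ((t - t') * q) Q = spow rho t' ++ rho'.
  rewrite {1}HQd (_ : t = (t - t') + t'); last lia.
  rewrite spowD -catA drop_size_cat // size_spow Hrho; congr muln; lia.
rewrite -Hdrop in HQ'.
have Hcq : (t - t') * q <= t * q by rewrite leq_mul2r; lia.
move: HQ' Hsz; move Ec: (t - t') => c HQ' Hsz.
rewrite Ec in Hcq.
have Hm : 8 * tau <= size Q - c * q.
  by move: Hsz; rewrite HQ' size_map size_drop; lia.
pose f := fun k => nth x0 rho (k %% q).
have Hf : forall k, f (k + q) = f k by move=> k; rewrite /f modnDr.
have HQf : forall k, k < size Q -> nth x0 Q k = f k.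
  move=> k Hk; rewrite HQd nth_cat size_spow Hrho; case: ifP => H1.
    by rewrite nth_spow ?Hrho //.
  case/prefixP: Hpre => r Hr.
  have Htq : t * q <= k by lia.
  have Hmod : k %% q = k - t * q.
    by rewrite -{1}(subnK Htq) addnC modnMDl modn_small //; lia.
  rewrite /f Hmod Hr nth_cat ifT //; lia.
rewrite (@periodic_main _ x0 f q c q0 Hf tau Q P S p t1 Hq4 HQf ltac:(lia) Hm HSs HQP).
rewrite HQ' rk_per //; last lia.
case: (boolP (infix Q S)) => HinfS.
  rewrite rk_per //; last lia.
  by rewrite occ_map; split; [case | ].
have -> : rk Q (map Some (drop (c * q) Q)) S = [::] by rewrite /rk (negbTE HinfS).
split; first by case.
have Ha := infix_index_occ HQP.
have HD : 0 < size (map Some (D P (infix_index Q P) (c * q))).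
  move/(occP x0 _ _ n0): Ha => [Has _].
  rewrite size_map size_D; lia.
by move/(occP None _ _ HD) => [Hs _]; move: Hs => /=; lia.
Qed.
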